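(* There is an absolute constant $c>0$ such that for every sufficiently large positive integer $n$ the following holds. Let $f=f_n:\mathbb{R}\to\mathbb{R}$ be the continuous function which equals $1$ on $[\frac{1}{n},1-\frac{1}{n}]$, equals $-1$ on $[-1+\frac{1}{n},-\frac{1}{n}]$, equals $0$ for $|t|\geq 1$, and is linear on each of the intervals $[-1,-1+\frac{1}{n}]$, $[-\frac{1}{n},\frac{1}{n}]$ and $[1-\frac{1}{n},1]$. Then $$\bigg|\,\mathrm{p.v.}\int_{\mathbb{R}} e^{if(t)}\frac{dt}{t}\bigg| \geq c \log n.$$
   Context: The principal value integral is $\mathrm{p.v.}\int_{\mathbb{R}} e^{if(t)}\frac{dt}{t}=\lim_{\epsilon\to 0^+,\,R\to\infty}\int_{\epsilon\leq |t|\leq R} e^{if(t)}\frac{dt}{t}$. *)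

(* Defs.v *)
From Stdlib Require Import Reals Lra.
From Coquelicot Require Import Coquelicot.
Open Scope R_scope.

Definition fn (n : nat) (t : R) : R :=
  let N := INR n in
  if Rle_dec 1 (Rabs t) then 0
  else if Rle_dec t (-1 + / N) then - (N * (t + 1))
  else if Rle_dec t (- / N) then -1
  else if Rle_dec t (/ N) then N * t
  else if Rle_dec t (1 - / N) then 1
  else N * (1 - t).

Definition cexpi (theta : R) : C := (cos theta, sin theta).

Definition pv_integrand (f : R -> R) (t : R) : C := scal (/ t) (cexpi (f t)).

Definition trunc_int (f : R -> R) (eps Rb : R) : C :=
  plus (RInt (V:=C_R_CompleteNormedModule) (pv_integrand f) (- Rb) (- eps)) (RInt (V:=C_R_CompleteNormedModule) (pv_integrand f) eps Rb).

Definition pv_integral_is (f : R -> R) (L : C) : Prop :=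
  forall delta : R, 0 < delta ->
    exists eta : R, 0 < eta /\ exists M : R,
      forall eps Rb : R, 0 < eps -> eps < eta -> M < Rb ->
        Cmod (minus (trunc_int f eps Rb) L) < delta.

(* Main.v *)
Require Import Defs.
From Stdlib Require Import Reals Lra Psatz.
From Coquelicot Require Import Coquelicot.
Open Scope R_scope.

Lemma a_facts (n : nat) : 3 <= INR n ->
  0 < / INR n /\ / INR n <= / 3 /\ INR n * / INR n = 1.
Proof.
  intros H. split; [apply Rinv_0_lt_compat; lra|]. split.
  - apply Rinv_le_contravar; lra.
  - field; lra.
Qed.

Ltac fn_cases n :=
  let H := fresh in
  unfold fn; repeat match goal with |- context [Rle_dec ?x ?y] => destruct (Rle_dec x y) end;
  repeat match goal with H : context [Rabs ?x] |- _ => unfold Rabs in H; destruct (Rcase_abs x) end.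

Lemma fn_p1 n t : 3 <= INR n -> 0 <= t <= / INR n -> fn n t = INR n * t.
Proof.
  intros HN Ht. destruct (a_facts n HN) as (H1&H2&H3).
  fn_cases n; set (a := / INR n) in *; try lra; nra.
Qed.

Lemma fn_p2 n t : 3 <= INR n -> / INR n <= t <= 1 - / INR n -> fn n t = 1.
Proof.
  intros HN Ht. destruct (a_facts n HN) as (H1&H2&H3).
  fn_cases n; set (a := / INR n) in *; try lra; nra.
Qed.

Lemma fn_p3 n t : 3 <= INR n -> 1 - / INR n <= t <= 1 -> fn n t = INR n * (1 - t).
Proof.
  intros HN Ht. destruct (a_facts n HN) as (H1&H2&H3).
  fn_cases n; set (a := / INR n) in *; try lra; nra.
Qed.

Lemma fn_p4 n t : 1 <= t -> fn n t = 0.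
Proof.
  intros Ht. unfold fn. destruct (Rle_dec 1 (Rabs t)) as [|h]; [lra|].
  exfalso; apply h. rewrite Rabs_pos_eq; lra.
Qed.

Lemma fn_odd n t : 3 <= INR n -> fn n (- t) = - fn n t.
Proof.
  intros HN. destruct (a_facts n HN) as (H1&H2&H3).
  unfold fn. set (a := / INR n) in *. set (N := INR n) in *.
  rewrite Rabs_Ropp.
  destruct (Rle_dec 1 (Rabs t)); [lra|].
  assert (Hb : -1 < t < 1).
  { unfold Rabs in n0; destruct (Rcase_abs t); lra. }
  repeat match goal with |- context [Rle_dec ?x ?y] => destruct (Rle_dec x y) end;
  try lra; nra.
Qed.

Lemma cont_lin (phi : R -> R) (Hphi : forall x, continuity_pt phi x) al be z :
  z <> 0 -> continuous (fun t => phi (al * t + be) / t) z.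
Proof.
  intros Hz. apply continuity_pt_filterlim.
  apply (continuity_pt_div (fun t => phi (al * t + be)) (fun t => t)); auto.
  - apply (continuity_pt_comp (fun t => al * t + be) phi); [|apply Hphi].
    apply derivable_continuous_pt. reg.
  - apply derivable_continuous_pt; reg.
Qed.

Lemma ex_lin (phi : R -> R) (Hphi : forall x, continuity_pt phi x) al be a b :
  0 < a -> a <= b -> ex_RInt (fun t => phi (al * t + be) / t) a b.
Proof.
  intros Ha Hab. apply (ex_RInt_continuous (V:=R_CompleteNormedModule)). intros z Hz.
  rewrite Rmin_left, Rmax_right in Hz by lra.
  apply cont_lin; auto; lra.
Qed.

Section G.
Variable phi : R -> R.
Hypothesis Hphi : forall x, continuity_pt phi x.
Variable n : nat.
Hypothesis HN : 3 <= INR n.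
Definition g t := phi (fn n t) / t.

Lemma ex_g1 a b : 0 < a -> a <= b -> b <= / INR n -> ex_RInt g a b.
Proof.
  intros. apply (ex_RInt_ext (fun t => phi (INR n * t + 0) / t)).
  - intros x Hx. rewrite Rmin_left, Rmax_right in Hx by lra.
    unfold g. rewrite fn_p1 by (auto; lra). f_equal. f_equal. ring.
  - apply ex_lin; auto.
Qed.

Lemma ex_g2 : ex_RInt g (/ INR n) (1 - / INR n).
Proof.
  destruct (a_facts n HN) as (H1&H2&H3).
  apply (ex_RInt_ext (fun t => phi (0 * t + 1) / t)).
  - intros x Hx. rewrite Rmin_left, Rmax_right in Hx by lra.
    unfold g. rewrite fn_p2 by (auto; lra). f_equal. f_equal. ring.
  - apply ex_lin; auto; lra.
Qed.

Lemma ex_g3 : ex_RInt g (1 - / INR n) 1.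
Proof.
  destruct (a_facts n HN) as (H1&H2&H3).
  apply (ex_RInt_ext (fun t => phi ((- INR n) * t + INR n) / t)).
  - intros x Hx. rewrite Rmin_left, Rmax_right in Hx by lra.
    unfold g. rewrite fn_p3 by (auto; lra). f_equal. f_equal. ring.
  - apply ex_lin; auto; lra.
Qed.

Lemma ex_g4 b : 1 <= b -> ex_RInt g 1 b.
Proof.
  intros Hb.
  apply (ex_RInt_ext (fun t => phi (0 * t + 0) / t)).
  - intros x Hx. rewrite Rmin_left, Rmax_right in Hx by lra.
    unfold g. rewrite fn_p4 by lra. f_equal. f_equal. ring.
  - apply ex_lin; auto; lra.
Qed.

Lemma ex_g e b : 0 < e -> e <= / INR n -> 1 <= b -> ex_RInt g e b.
Proof.
  intros. apply ex_RInt_Chasles with (/ INR n); [apply ex_g1; lra|].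
  apply ex_RInt_Chasles with (1 - / INR n); [apply ex_g2|].
  apply ex_RInt_Chasles with 1; [apply ex_g3|apply ex_g4; lra].
Qed.
End G.

Lemma pv_eq f t : pv_integrand f t = (cos (f t) / t, sin (f t) / t).
Proof.
  unfold pv_integrand, cexpi, Rdiv. rewrite !(Rmult_comm _ (/ t)). reflexivity.
Qed.

Lemma Cmod_0y x y : x = 0 -> Cmod (x, y) = Rabs y.
Proof.
  intros ->. unfold Cmod. simpl. rewrite <- sqrt_Rsqr_abs. f_equal. unfold Rsqr. ring.
Qed.

Lemma trunc_eq n eps Rb : 3 <= INR n -> 0 < eps <= / INR n -> 1 <= Rb ->
  trunc_int (fn n) eps Rb = (0, 2 * RInt (g sin n) eps 1).
Proof.
  intros HN He HR.
  destruct (a_facts n HN) as (H1&H2&H3).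
  assert (Ec : ex_RInt (g cos n) eps Rb) by (apply (ex_g cos continuity_cos n HN); lra).
  assert (Es : ex_RInt (g sin n) eps Rb) by (apply (ex_g sin continuity_sin n HN); lra).
  set (Ic := RInt (g cos n) eps Rb). set (Is := RInt (g sin n) eps Rb).
  assert (HP : is_RInt (V:=C_R_CompleteNormedModule) (pv_integrand (fn n)) eps Rb (Ic, Is)).
  { apply (is_RInt_ext (V:=C_R_CompleteNormedModule) (fun t => (g cos n t, g sin n t))).
    - intros t _. rewrite pv_eq. reflexivity.
    - exact (is_RInt_fct_extend_pair (U:=R_NormedModule) (V:=R_NormedModule)
              (fun t => (g cos n t, g sin n t)) eps Rb Ic Is (RInt_correct _ _ _ Ec) (RInt_correct _ _ _ Es)). }
  assert (HM : is_RInt (V:=C_R_CompleteNormedModule) (pv_integrand (fn n)) (- Rb) (- eps) (- Ic, Is)).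
  { apply (is_RInt_ext (V:=C_R_CompleteNormedModule)
       (fun y => opp (opp (pv_integrand (fn n) (- - y))))).
    - intros y _. rewrite opp_opp, Ropp_involutive. reflexivity.
    - apply (is_RInt_comp_opp (V:=C_R_CompleteNormedModule) (fun t => opp (pv_integrand (fn n) (- t)))).
      rewrite !Ropp_involutive.
      apply (is_RInt_ext (V:=C_R_CompleteNormedModule) (fun t => (g cos n t, - g sin n t))).
      + intros t Ht. rewrite Rmin_right, Rmax_left in Ht by lra.
        rewrite pv_eq, fn_odd, cos_neg, sin_neg by auto. unfold g.
        unfold opp; simpl. unfold Copp; simpl. f_equal; field; lra.
      + apply (is_RInt_fct_extend_pair (U:=R_NormedModule) (V:=R_NormedModule)
              (fun t => (g cos n t, - g sin n t)) Rb eps (- Ic) Is).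
        * simpl. apply (is_RInt_swap (V:=R_NormedModule)). apply (RInt_correct (V:=R_CompleteNormedModule)). exact Ec.
        * simpl. replace Is with (opp (opp Is)) by apply opp_opp.
          apply (is_RInt_swap (V:=R_NormedModule)).
          apply (is_RInt_opp (V:=R_NormedModule) (g sin n)).
          apply (RInt_correct (V:=R_CompleteNormedModule)). exact Es. }
  unfold trunc_int.
  rewrite (is_RInt_unique _ _ _ _ HP), (is_RInt_unique _ _ _ _ HM).
  assert (E0 : RInt (g sin n) 1 Rb = 0).
  { rewrite (RInt_ext (V:=R_CompleteNormedModule) _ (fun _ => 0)).
    - rewrite RInt_const. apply Rmult_0_r.
    - intros x Hx. rewrite Rmin_left, Rmax_right in Hx by lra.
      unfold g. rewrite fn_p4 by lra. rewrite sin_0. apply Rmult_0_l. }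
  assert (EI : Is = RInt (g sin n) eps 1).
  { unfold Is. rewrite <- (RInt_Chasles (V:=R_CompleteNormedModule) (g sin n) eps 1 Rb).
    - rewrite E0. apply (plus_zero_r (G:=R_AbelianGroup)).
    - apply (ex_g sin continuity_sin n HN); lra.
    - apply (ex_g4 sin continuity_sin n); lra. }
  rewrite <- EI. unfold plus; simpl. unfold Cplus; simpl. unfold prod_plus, plus; simpl. apply injective_projections; simpl; lra.
Qed.

Section M.
Variable n : nat.
Hypothesis HN : 3 <= INR n.
Let N := INR n.
Let a := / INR n.
Let J e := RInt (g sin n) e 1.

Lemma gs_bnd t : 0 < t <= a -> 0 <= g sin n t <= N.
Proof.
  intros Ht. destruct (a_facts n HN) as (H1&H2&H3). unfold a in *.
  unfold g. rewrite fn_p1 by (auto; lra). fold N.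
  assert (HNt : 0 < N * t <= 1) by (unfold N; nra).
  assert (Hs : 0 <= sin (N * t)) by (apply sin_ge_0; pose proof PI2_1; lra).
  assert (Hs2 : sin (N * t) < N * t) by (apply sin_lt_x; lra).
  split.
  - unfold Rdiv. apply Rmult_le_pos; auto. left; apply Rinv_0_lt_compat; lra.
  - replace N with ((N * t) * / t) at 2 by (field; lra).
    unfold Rdiv. apply Rmult_le_compat_r; [left; apply Rinv_0_lt_compat; lra|lra].
Qed.

Lemma J_split e' e : 0 < e' -> e' <= e -> e <= a ->
  J e' = RInt (g sin n) e' e + J e /\ 0 <= RInt (g sin n) e' e <= N * (e - e').
Proof.
  intros Hp Hq Hr. destruct (a_facts n HN) as (H1&H2&H3). unfold a in *.
  assert (E1 : ex_RInt (g sin n) e' e) by (apply (ex_g1 sin continuity_sin n HN); lra).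
  split.
  - unfold J. symmetry. apply (RInt_Chasles (V:=R_CompleteNormedModule)); auto.
    apply (ex_g sin continuity_sin n HN); lra.
  - split.
    + apply RInt_ge_0; auto. intros x Hx. apply gs_bnd. unfold a; lra.
    + apply Rle_trans with (RInt (fun _ => N) e' e).
      * apply RInt_le; auto. apply ex_RInt_const.
        intros x Hx. apply gs_bnd. unfold a; lra.
      * rewrite RInt_const. simpl. unfold scal; simpl. unfold mult; simpl. lra.
Qed.

Lemma J_a_lower : sin 1 * ln (N - 1) <= J a.
Proof.
  destruct (a_facts n HN) as (H1&H2&H3). unfold a, J, N in *.
  assert (Hs1 : 0 < sin 1) by (apply sin_gt_0; pose proof PI2_1; lra).
  rewrite <- (RInt_Chasles (V:=R_CompleteNormedModule) (g sin n) (/ INR n) (1 - / INR n) 1).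
  2: apply (ex_g2 sin continuity_sin n HN).
  2: apply (ex_g3 sin continuity_sin n HN).
  assert (P2 : 0 <= RInt (g sin n) (1 - / INR n) 1).
  { apply RInt_ge_0; [lra| apply (ex_g3 sin continuity_sin n HN)|].
    intros x Hx. unfold g. rewrite fn_p3 by (auto; lra).
    unfold Rdiv. apply Rmult_le_pos; [|left; apply Rinv_0_lt_compat; lra].
    apply sin_ge_0; pose proof PI2_1; nra. }
  assert (P1 : RInt (g sin n) (/ INR n) (1 - / INR n) = sin 1 * ln (1 - / INR n) - sin 1 * ln (/ INR n)).
  { rewrite (RInt_ext (V:=R_CompleteNormedModule) _ (fun t => sin 1 / t)).
    - apply is_RInt_unique.
      apply (is_RInt_derive (V:=R_CompleteNormedModule) (fun t => sin 1 * ln t)).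
      + intros x Hx. rewrite Rmin_left, Rmax_right in Hx by lra.
        auto_derive; [lra|]. field; lra.
      + intros x Hx. rewrite Rmin_left, Rmax_right in Hx by lra.
        apply (ex_derive_continuous (K:=R_AbsRing) (V:=R_NormedModule)). auto_derive. lra.
    - intros x Hx. rewrite Rmin_left, Rmax_right in Hx by lra.
      unfold g. rewrite fn_p2 by (auto; lra). reflexivity. }
  assert (Hl : ln (1 - / INR n) = ln (INR n - 1) + ln (/ INR n)).
  { replace (1 - / INR n) with ((INR n - 1) * / INR n) by (field; lra).
    apply ln_mult; [lra|apply Rinv_0_lt_compat; lra]. }
  rewrite P1, Hl. unfold plus; simpl. rewrite Rmult_plus_distr_l. lra.
Qed.

Lemma S_exists : { S : R | (forall e, 0 < e < a -> J e <= S <= J e + N * e) }.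
Proof.
  destruct (a_facts n HN) as (H1&H2&H3).
  set (E := fun x => exists e, 0 < e < a /\ x = J e).
  assert (Hup : forall e, 0 < e < a -> forall x, E x -> x <= J e + N * e).
  { intros e He x [e' [He' ->]].
    destruct (Rle_lt_dec e' e) as [Hle|Hlt].
    - destruct (J_split e' e) as [Eq [B1 B2]]; try lra.
      rewrite Eq. assert (N * (e - e') <= N * e) by (unfold N; nra). lra.
    - destruct (J_split e e') as [Eq [B1 B2]]; try lra.
      assert (0 <= N * e) by (unfold N; nra). lra. }
  destruct (completeness E) as [S HS].
  - exists (J (a/2) + N * (a/2)). intros x Hx. apply (Hup (a/2)); auto. unfold a; lra.
  - exists (J (a/2)). exists (a/2). split; [unfold a; lra|auto].
  - exists S. intros e He. split.
    + apply HS. exists e; auto.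
    + apply HS. intros x Hx. apply (Hup e He x Hx).
Qed.
End M.

Theorem lemma1 :
  exists c : R, 0 < c /\
    exists N0 : nat, forall n : nat, (N0 <= n)%nat ->
      exists L : C, pv_integral_is (fn n) L /\ c * ln (INR n) <= Cmod L.
Proof.
  assert (Hs1 : 0 < sin 1) by (apply sin_gt_0; pose proof PI2_1; lra).
  exists (sin 1). split; [exact Hs1|]. exists 3%nat. intros n Hn.
  assert (HN : 3 <= INR n).
  { apply le_INR in Hn. replace 3 with (INR 3) by (simpl; ring). exact Hn. }
  destruct (a_facts n HN) as (H1&H2&H3).
  destruct (S_exists n HN) as [S HS].
  exists (0, 2 * S). split.
  - intros delta Hd.
    assert (Hq : 0 < delta / (2 * INR n + 1)) by (apply Rdiv_lt_0_compat; lra).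
    exists (Rmin (/ INR n) (delta / (2 * INR n + 1))). split.
    { apply Rmin_pos; lra. }
    exists 1. intros eps Rb He Heta HR.
    pose proof (Rmin_l (/ INR n) (delta / (2 * INR n + 1))).
    pose proof (Rmin_r (/ INR n) (delta / (2 * INR n + 1))).
    rewrite trunc_eq by lra.
    match goal with |- Cmod ?m < _ => replace m with ((0, 2 * RInt (g sin n) eps 1 - 2 * S) : C) end.
    2:{ unfold minus, plus, opp; simpl. unfold Cplus, Copp; simpl.
      apply injective_projections; simpl; unfold plus, opp; simpl; try unfold prod_plus; simpl; ring. }
    rewrite Cmod_0y by reflexivity.
    destruct (HS eps) as [B1 B2]; [lra|].
    rewrite Rabs_minus_sym, Rabs_pos_eq by lra.
    assert (Hk : eps < delta / (2 * INR n + 1)) by lra.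
    apply (Rmult_lt_compat_r (2 * INR n + 1)) in Hk; [|lra].
    replace (delta / (2 * INR n + 1) * (2 * INR n + 1)) with delta in Hk by (field; lra).
    nra.
  - rewrite Cmod_0y by reflexivity.
    destruct (HS (/ INR n / 2)) as [B1 B2]; [lra|].
    destruct (J_split n HN (/ INR n / 2) (/ INR n)) as [Eq [C1 C2]]; try lra.
    pose proof (J_a_lower n HN) as JL.
    assert (Hl : ln (INR n) <= 2 * ln (INR n - 1)).
    { replace (2 * ln (INR n - 1)) with (ln ((INR n - 1) * (INR n - 1))).
      - apply ln_le; nra.
      - rewrite ln_mult by lra. ring. }
    apply Rle_trans with (2 * S); [|apply Rle_abs].
    assert (sin 1 * ln (INR n) <= sin 1 * (2 * ln (INR n - 1))) by (apply Rmult_le_compat_l; lra).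
    simpl in Eq. lra.
Qed.
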